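(* For integers $1\le r<n$, $$\mathrm{LE}(n)\cap\left(\frac{n!}{r+1},\,n!\right]=\left\{\frac{n!}{r!}\,\ell:\ \ell\in \mathrm{LE}(r)\cap\left(\frac{r!}{r+1},\,r!\right]\right\}.$$
   Context: All posets are finite. For a finite poset $P$, $\mathrm{ext}(P)$ denotes the number of linear extensions of $P$. For a positive integer $n$, $\mathrm{LE}(n)=\{\mathrm{ext}(P): P \text{ a poset with } |P|=n\}$. *)

(* Defs.v *)
From mathcomp Require Import all_boot all_fingroup.
Set Implicit Arguments. Unset Strict Implicit. Unset Printing Implicit Defensive.

(* A (finite) poset with n elements, up to isomorphism, is a partial order
   (reflexive, antisymmetric, transitive relation) on 'I_n. *)
Definition is_poset (n : nat) (R : rel 'I_n) : Prop :=
  reflexive R /\ antisymmetric R /\ transitive R.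

(* A linear extension of R is an order-preserving bijection s from the poset
   onto the chain 0 < 1 < ... < n-1 (s x = position of x). *)
Definition is_linext (n : nat) (R : rel 'I_n) (s : {perm 'I_n}) : bool :=
  [forall x, forall y, R x y ==> (s x <= s y)].

Definition ext (n : nat) (R : rel 'I_n) : nat :=
  #|[set s : {perm 'I_n} | is_linext R s]|.

Definition LE (n m : nat) : Prop :=
  exists R : rel 'I_n, is_poset R /\ ext R = m.

(* Main.v *)
Require Import Defs.
From mathcomp Require Import all_boot all_fingroup.
From mathcomp Require Import zify.
Set Implicit Arguments. Unset Strict Implicit. Unset Printing Implicit Defensive.

Definition liftR n (R : rel 'I_n.+1) (i : 'I_n.+1) : rel 'I_n :=
  fun x y => R (lift i x) (lift i y).

Lemma L0 n (i j : 'I_n.+1) (F : 'S_n.+1 -> nat) :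
  \sum_(s : 'S_n.+1 | s i == j) F s = \sum_(s : 'S_n) F (lift_perm i j s).
Proof.
rewrite (reindex (lift_perm i j)); last first.
  pose ulsf i (s : 'S_n.+1) k := odflt k (unlift (s i) (s (lift i k))).
  have ulsfK i0 (s : 'S_n.+1) k: lift (s i0) (ulsf i0 s k) = s (lift i0 k).
    rewrite /ulsf; have:= neq_lift i0 k.
    by rewrite -(can_eq (permK s)) => /unlift_some[] ? ? ->.
  have inj_ulsf: injective (ulsf i _).
    move=> s; apply: can_inj (ulsf (s i) s^-1%g) _ => k'.
    by rewrite {1}/ulsf ulsfK !permK liftK.
  exists (fun s => perm (inj_ulsf s)) => [s _ | s].
    by apply/permP=> k'; rewrite permE /ulsf lift_perm_lift lift_perm_id liftK.
  move/(s _ =P _) => si0; apply/permP=> k.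
  case: (unliftP i k) => [k'|] ->; rewrite ?lift_perm_id //.
  by rewrite lift_perm_lift -si0 permE ulsfK.
by apply: eq_bigl => s; rewrite lift_perm_id eqxx.
Qed.

Lemma ext_sumb n (R : rel 'I_n) : ext R = \sum_(s : 'S_n) (is_linext R s : nat).
Proof.
rewrite /ext -sum1dep_card big_mkcond; apply: eq_bigr => s _; by case: ifP.
Qed.

Lemma lift_neq n (i : 'I_n.+1) x : lift i x != i.
Proof. by rewrite eq_sym neq_lift. Qed.

Lemma lift_le n (j : 'I_n.+1) (a b : 'I_n) : (lift j a <= lift j b) = (a <= b).
Proof. by rewrite /= leq_bump2. Qed.

Lemma linext_iso n (R : rel 'I_n.+1) i j s :
  (forall z, z != i -> ~~ R i z && ~~ R z i) ->
  is_linext R (lift_perm i j s) = is_linext (liftR R i) s.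
Proof.
move=> iso; apply/forallP/forallP => H x.
  apply/forallP => y; apply/implyP => Rxy.
  by move: (implyP (forallP (H (lift i x)) (lift i y)) Rxy); rewrite !lift_perm_lift lift_le.
apply/forallP => y; apply/implyP => Rxy.
case: (unliftP i x) => [x'|] Ex; case: (unliftP i y) => [y'|] Ey; subst.
- by rewrite !lift_perm_lift lift_le; exact: (implyP (forallP (H x') y') Rxy).
- by move: (iso (lift i x') (lift_neq _ _)); rewrite Rxy andbF.
- by move: (iso (lift i y') (lift_neq _ _)); rewrite Rxy.
- by [].
Qed.

Definition maxl n (R : rel 'I_n) x := [forall z, R x z ==> (z == x)].

Lemma linext_top n (R : rel 'I_n.+1) i s :
  is_linext R (lift_perm i ord_max s) = maxl R i && is_linext (liftR R i) s.
Proof.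
apply/idP/andP => [H | [Hm H]].
  split.
    apply/forallP => z; apply/implyP => Riz.
    case: (unliftP i z) => [z'|] Ez; subst; last by [].
    move: (implyP (forallP (forallP H i) (lift i z')) Riz).
    by rewrite lift_perm_id lift_perm_lift lift_max /= leqNgt ltn_ord.
  apply/forallP => x; apply/forallP => y; apply/implyP => Rxy.
  by move: (implyP (forallP (forallP H (lift i x)) (lift i y)) Rxy); rewrite !lift_perm_lift lift_le.
apply/forallP => x; apply/forallP => y; apply/implyP => Rxy.
case: (unliftP i x) => [x'|] Ex; case: (unliftP i y) => [y'|] Ey; subst.
- by rewrite !lift_perm_lift lift_le; exact: (implyP (forallP (forallP H x') y') Rxy).
- by rewrite lift_perm_id /= -ltnS ltn_ord.
- by move: (implyP (forallP Hm (lift i y')) Rxy); rewrite (negbTE (lift_neq _ _)).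
- by [].
Qed.

Lemma ext_iso n (R : rel 'I_n.+1) i :
  (forall z, z != i -> ~~ R i z && ~~ R z i) ->
  ext R = n.+1 * ext (liftR R i).
Proof.
move=> iso; rewrite !ext_sumb (partition_big (fun s : 'S_n.+1 => s i) predT) //=.
rewrite (eq_bigr (fun _ => ext (liftR R i))); last first.
  move=> j _; rewrite L0 ext_sumb; apply: eq_bigr => s _; by rewrite linext_iso.
by rewrite sum_nat_const card_ord ext_sumb.
Qed.

Lemma ext_top n (R : rel 'I_n.+1) :
  ext R = \sum_i (maxl R i * ext (liftR R i)).
Proof.
rewrite ext_sumb (partition_big (fun s : 'S_n.+1 => (s^-1)%g ord_max) predT) //=.
apply: eq_bigr => i _.
rewrite (eq_bigl (fun s : 'S_n.+1 => s i == ord_max)); last first.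
  move=> s /=; apply/eqP/eqP => [<-|<-]; by rewrite ?permKV ?permK.
rewrite L0 ext_sumb big_distrr /=; apply: eq_bigr => s _.
by rewrite linext_top; case: (maxl R i); case: (is_linext _ _).
Qed.
Definition noniso n (R : rel 'I_n) : {set 'I_n} :=
  [set x | [exists y, (y != x) && (R x y || R y x)]].

Lemma poset_lift n (R : rel 'I_n.+1) i : is_poset R -> is_poset (liftR R i).
Proof.
move=> [Hr [Ha Ht]]; split; [|split].
- by move=> x; exact: Hr.
- by move=> x y H; apply: (lift_inj (h:=i)); apply: Ha.
- by move=> x y z H1 H2; exact: (Ht _ _ _ H1 H2).
Qed.

Lemma ext_le n (R : rel 'I_n) : ext R <= n`!.
Proof. by rewrite /ext -card_Sn; apply: max_card. Qed.

Lemma noniso_liftE n (R : rel 'I_n.+1) i z w :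
  z != i -> w != i -> w != z -> R z w || R w z ->
  z \in [set lift i x | x in noniso (liftR R i)].
Proof.
move=> zi wi wz Rzw.
case: (unliftP i z) => [z'|] Ez; last by rewrite Ez eqxx in zi.
case: (unliftP i w) => [w'|] Ew; last by rewrite Ew eqxx in wi.
subst; apply: imset_f; rewrite inE; apply/existsP; exists w'.
by rewrite (inj_eq (@lift_inj _ i)) in wz; rewrite wz.
Qed.

Lemma noniso_lift_le n (R : rel 'I_n.+1) i : #|noniso (liftR R i)| <= #|noniso R|.
Proof.
rewrite -(card_imset _ (@lift_inj _ i)); apply: subset_leq_card.
apply/subsetP => z /imsetP [x]; rewrite inE => /existsP [y /andP [yx H]] ->.
rewrite inE; apply/existsP; exists (lift i y); rewrite (inj_eq (@lift_inj _ i)) yx.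
exact: H.
Qed.

Lemma noniso_lift_iso n (R : rel 'I_n.+1) i : i \notin noniso R ->
  #|noniso R| <= #|noniso (liftR R i)|.
Proof.
move=> ni; apply: leq_trans (leq_imset_card (lift i) _); apply: subset_leq_card.
apply/subsetP => z; rewrite inE => /existsP [w /andP [wz H]].
have zi : z != i.
  by apply/eqP => E; subst; move: ni; rewrite inE; case/existsP; exists w; rewrite wz H.
have wi : w != i.
  apply/eqP => E; subst; move: ni; rewrite inE; case/existsP; exists z.
  by rewrite eq_sym wz orbC H.
exact: noniso_liftE zi wi wz H.
Qed.

Definition Mx n (R : rel 'I_n) : {set 'I_n} := [set x | maxl R x && (x \in noniso R)].

Lemma noniso_lift_max n (R : rel 'I_n.+1) i : i \in Mx R -> 1 < #|Mx R| ->
  #|Mx R| <= #|noniso (liftR R i)|.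
Proof.
move=> iM t2; move: (iM); rewrite inE => /andP [mi _].
have : 0 < #|Mx R :\ i| by move: t2; rewrite (cardsD1 i (Mx R)); case: (i \in Mx R) => /=; lia.
rewrite card_gt0 => /set0Pn [j0]; rewrite !inE => /andP [j0i /andP [mj0 nj0]].
move: (nj0) => /existsP [y /andP [yj0 Hy]].
have Ryj : R y j0.
  case/orP: Hy => // Rj; by move: (implyP (forallP mj0 y) Rj); rewrite (negbTE yj0).
have yi : y != i.
  apply/eqP => E; subst; by move: (implyP (forallP mi j0) Ryj); rewrite (negbTE j0i).
have yM : y \notin Mx R.
  rewrite inE; apply/negP => /andP [my _].
  by move: (implyP (forallP my j0) Ryj); rewrite eq_sym (negbTE yj0).
have -> : #|Mx R| = #|y |: (Mx R :\ i)|.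
  by rewrite cardsU1 (cardsD1 i (Mx R)) iM in_setD1 yi /= yM.
apply: leq_trans (leq_imset_card (lift i) _); apply: subset_leq_card.
apply/subsetP => z; rewrite !inE => /orP [/eqP -> | /andP [zi /andP [mz nz]]].
  by apply: (noniso_liftE (w := j0)) => //; rewrite ?Ryj ?orbT // eq_sym.
move: nz => /existsP [w /andP [wz H]].
have Rwz : R w z.
  case/orP: H => // Rz; by move: (implyP (forallP mz w) Rz); rewrite (negbTE wz).
have wi : w != i.
  apply/eqP => E; subst; by move: (implyP (forallP mi z) Rwz); rewrite (negbTE zi).
by apply: (noniso_liftE (w := w)) => //; rewrite Rwz orbT.
Qed.

Lemma bound n (R : rel 'I_n) : is_poset R -> ext R * maxn #|noniso R| 1 <= n`!.
Proof.
elim: n R => [|m IH] R PR.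
  have -> : #|noniso R| = 0.
    by move: (max_card (noniso R)); rewrite card_ord; case: #|_|.
  by rewrite muln1 ext_le.
have IHi i : ext (liftR R i) * maxn #|noniso (liftR R i)| 1 <= m`!.
  exact: IH (poset_lift _ PR).
set N := noniso R; set k := #|N|.
have kle : k <= m.+1 by have := max_card N; rewrite card_ord.
case: (posnP k) => [k0 | kpos].
  by rewrite k0 muln1 ext_le.
have -> : maxn k 1 = k by apply/maxn_idPl.
rewrite ext_top (bigID (fun i => i \in N)) /= mulnDl.
have P1 : (\sum_(i | ~~ (i \in N)) maxl R i * ext (liftR R i)) * k <= (m.+1 - k) * m`!.
  rewrite big_distrl /=.
  apply: leq_trans (_ : \sum_(i | ~~ (i \in N)) m`! <= _).
    apply: leq_sum => i ni.
    apply: leq_trans (_ : ext (liftR R i) * k <= _).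
      by rewrite leq_mul2r; case: (maxl R i); rewrite ?mul1n ?mul0n ?leqnn ?orbT.
    apply: leq_trans (IHi i); rewrite leq_mul2l; apply/orP; right.
    apply: (leq_trans _ (leq_maxl _ _)); exact: noniso_lift_iso.
  rewrite (eq_bigl (fun i => i \in ~: N)); last by move=> i; rewrite in_setC.
  have EC : #|~: N| = m.+1 - k by apply/eqP; rewrite -(eqn_add2l k) subnKC // cardsC card_ord.
  by rewrite sum_nat_const EC.
have P2 : \sum_(i | i \in N) maxl R i * ext (liftR R i) <= m`!.
  have -> : \sum_(i | i \in N) maxl R i * ext (liftR R i) =
            \sum_(i in Mx R) ext (liftR R i).
    rewrite big_mkcond [RHS]big_mkcond; apply: eq_bigr => i _; rewrite /Mx in_set /N /noniso !in_set.
    by case: [exists y, (y != i) && (R i y || R y i)]; case: (maxl R i); rewrite /= ?mul1n ?mul0n.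
  set t := #|Mx R|.
  case: (posnP t) => [t0 | tpos].
    by move/eqP: t0; rewrite cards_eq0 => /eqP ->; rewrite big_set0.
  rewrite -(leq_pmul2r tpos) big_distrl /=.
  apply: leq_trans (_ : \sum_(i in Mx R) m`! <= _); last by rewrite sum_nat_const mulnC.
  apply: leq_sum => i iM.
  apply: leq_trans (IHi i); rewrite leq_mul2l; apply/orP; right.
  case: (leqP t 1) => t1; first by apply: leq_trans t1 (leq_maxr _ _).
  apply: (leq_trans _ (leq_maxl _ _)); exact: noniso_lift_max.
apply: leq_trans (leq_add (leq_mul P2 (leqnn k)) P1) _.
by rewrite factS [m`! * k]mulnC -mulnDl subnKC.
Qed.

Lemma ext_eq n (R1 R2 : rel 'I_n) : R1 =2 R2 -> ext R1 = ext R2.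
Proof.
move=> E; rewrite /ext; apply: eq_card => s; rewrite !inE /is_linext.
by apply: eq_forallb => x; apply: eq_forallb => y; rewrite E.
Qed.

Definition extR m (R : rel 'I_m) : rel 'I_m.+1 := fun x y =>
  match unlift ord_max x, unlift ord_max y with
  | Some a, Some b => R a b
  | _, _ => x == y
  end.

Lemma extR_poset m (R : rel 'I_m) : is_poset R -> is_poset (extR R).
Proof.
move=> [Hr [Ha Ht]]; split; [|split].
- move=> x; rewrite /extR; case: (unliftP ord_max x) => [x'|] ?; subst x;
  rewrite ?liftK ?unlift_none ?eqxx //; exact: Hr.
- move=> x y; rewrite /extR.
  case: (unliftP ord_max x) => [x'|] ?; subst x; case: (unliftP ord_max y) => [y'|] ?; subst y;
    rewrite ?liftK ?unlift_none /= ?(negbTE (lift_neq _ _)) ?eqxx //=.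
  + by move=> H; rewrite (Ha _ _ H).
  all: try (by move=> /andP [] /eqP ->).
  all: try (by move=> /andP [/eqP E _]; move: (lift_neq ord_max x'); rewrite E eqxx).
  all: try (by move=> /andP [/eqP E _]; move: (lift_neq ord_max y'); rewrite -E eqxx).
- move=> y x z; rewrite /extR.
  case: (unliftP ord_max x) => [x'|] ?; subst x; case: (unliftP ord_max y) => [y'|] ?; subst y;
  case: (unliftP ord_max z) => [z'|] ?; subst z;
    rewrite ?liftK ?unlift_none /= ?(negbTE (lift_neq _ _)) ?eqxx //=;
    rewrite ?(eq_sym ord_max) ?(negbTE (lift_neq _ _)) //.
  all: try exact: Ht.
  all: try (by move=> _ /eqP ->).
  all: try (by move=> /eqP ->).
Qed.

Lemma extR_iso m (R : rel 'I_m) (z : 'I_m.+1) :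
  z != ord_max -> ~~ extR R ord_max z && ~~ extR R z ord_max.
Proof.
move=> zm; rewrite /extR unlift_none.
case: (unlift ord_max z) => [a|]; by rewrite /= eq_sym zm.
Qed.

Lemma ext_extR m (R : rel 'I_m) : ext (extR R) = m.+1 * ext R.
Proof.
rewrite (ext_iso (i := ord_max)); last exact: extR_iso.
by congr (_ * _); apply: ext_eq => x y; rewrite /liftR /extR !liftK.
Qed.

Fixpoint extd r (Q : rel 'I_r) (d : nat) : rel 'I_(d + r) :=
  match d return rel 'I_(d + r) with 0 => Q | d'.+1 => extR (@extd r Q d') end.
Arguments extd {r} Q d.

Lemma extd_spec r (Q : rel 'I_r) d : is_poset Q ->
  is_poset (extd Q d) /\ ext (extd Q d) * r`! = (d + r)`! * ext Q.
Proof.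
move=> PQ; elim: d => [|d [IHp IHe]] /=; first by rewrite mulnC.
split; first exact: extR_poset.
by rewrite ext_extR -mulnA IHe addSn factS mulnA.
Qed.

Lemma fact_dvd a b : a <= b -> a`! %| b`!.
Proof.
move=> ab; rewrite -(subnK ab); elim: (b - a) => [|d IH] //.
by rewrite addSn factS; exact: dvdn_mull.
Qed.

Lemma peel r N (P : rel 'I_N) : r <= N -> is_poset P -> #|noniso P| <= r ->
  exists Q : rel 'I_r, is_poset Q /\ ext P * r`! = N`! * ext Q.
Proof.
elim: N P => [|N IH] P rN PP nP.
  move: rN; rewrite leqn0 => /eqP rz; subst r.
  by exists P; split => //; rewrite mulnC.
case: (ltngtP r N.+1) => [rlt | rgt | req]; last first.
- by subst r; exists P; split => //; rewrite mulnC.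
- by rewrite ltnNge rN in rgt.
have : 0 < #|~: noniso P|.
  have := cardsC (noniso P); rewrite card_ord => E.
  by move: E nP rlt; set a := #|noniso P|; set b := #|~: _|; lia.
rewrite card_gt0 => /set0Pn [i]; rewrite in_setC => ni.
have iso : forall z, z != i -> ~~ P i z && ~~ P z i.
  move=> z zi; apply/andP; split; apply/negP => H; move: ni; rewrite inE;
  case/negP; apply/existsP; exists z; rewrite zi H ?orbT //.
have [Q [PQ E]] := IH (liftR P i) (ltnSE rlt) (poset_lift i PP)
   (leq_trans (noniso_lift_le P i) nP).
exists Q; split => //.
by rewrite (ext_iso iso) -mulnA E factS mulnA.
Qed.

Lemma LE_cast a b m : a = b -> LE a m -> LE b m.
Proof. by move=> ->. Qed.

Unset Implicit Arguments.

Theorem theorem6p3 (n r : nat) (hr1 : 1 <= r) (hrn : r < n) (m : nat) :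
  (LE n m /\ n`! < m * r.+1 /\ m <= n`!) <->
  (exists l : nat, [/\ LE r l, r`! < l * r.+1, l <= r`! & m = (n`! %/ r`!) * l]).
Proof.
have rn : r <= n by apply: ltnW.
set c := n`! %/ r`!.
have Ec : n`! = c * r`! by rewrite /c divnK // fact_dvd.
have cpos : 0 < c by move: (fact_gt0 n); rewrite Ec muln_gt0 => /andP [].
split.
  move=> [[P [PP eP]] [H1 H2]].
  have kr : #|noniso P| <= r.
    rewrite leqNgt; apply/negP => rk.
    have := bound PP; rewrite eP => B.
    have : m * r.+1 <= m * maxn #|noniso P| 1.
      by rewrite leq_mul2l (leq_trans rk (leq_maxl _ _)) orbT.
    move=> /leq_trans /(_ B); by rewrite leqNgt H1.
  have [Q [PQ E]] := peel rn PP kr.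
  have Em : m = c * ext Q.
    apply/eqP; rewrite -(eqn_pmul2r (fact_gt0 r)) -eP E Ec.
    by rewrite mulnAC.
  exists (ext Q); split => //.
  - by exists Q.
  - by move: H1; rewrite Ec Em -mulnA ltn_pmul2l.
  - by move: H2; rewrite Ec Em leq_pmul2l.
move=> [l [[Q [PQ eQ]] H1 H2 Em]].
have [Pp Pe] := extd_spec (n - r) PQ.
have Em' : ext (extd Q (n - r)) = m.
  apply/eqP; rewrite -(eqn_pmul2r (fact_gt0 r)) Pe subnK // Ec Em -eQ.
  by rewrite mulnAC.
split; first by apply: (LE_cast (subnK rn)); exists (extd Q (n - r)).
by rewrite Ec Em -mulnA ltn_pmul2l // leq_pmul2l // -eQ.
Qed.
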